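(* Let $d\ge1$, $D=\{1,\dots,d\}$, let $\Pi$ and $Q$ be $d\times d$ stochastic matrices indexed by $D$, and define $\mathcal{E}^{(O)}_H:\mathcal{M}_d\otimes\mathcal{M}_d\to\mathcal{M}_d$ by linear extension of $\mathcal{E}^{(O)}_H(a\otimes b)=\mathcal{E}_H(\mathcal{E}_{H,O}(a\otimes\mathbf{1}_d)\otimes b)$. Then $\mathcal{E}^{(O)}_H$ is completely positive and identity preserving, and for all $a,b\in\mathcal{M}_d$ $$\mathcal{E}^{(O)}_H(a\otimes b)=a\diamond P_{H,O}(\mathbf{1}_d)\diamond P_H(b)=\sum_{i,j,k,m,l\in D}a_{ij}b_{ml}\sqrt{Q_{ik}Q_{jk}}\sqrt{\Pi_{im}\Pi_{jl}}\,e_{ij},$$ where $a=(a_{ij})$, $b=(b_{ij})$.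
   Context: $\mathcal{M}_d$ is the algebra of complex $d\times d$ matrices with identity $\mathbf{1}_d$ and matrix units $e_{ij}$; $\diamond$ is the Schur (entrywise) product. A stochastic matrix has nonnegative entries and row sums $1$. $P_H(A)=\sum_{i,j,k,l\in D}\sqrt{\Pi_{ik}\Pi_{jl}}\,a_{kl}e_{ij}$, $P_{H,O}(B)=\sum_{i,j,k,l\in D}\sqrt{Q_{ik}Q_{jl}}\,b_{kl}e_{ij}$, and $\mathcal{E}_H,\mathcal{E}_{H,O}$ are the linear extensions of $\mathcal{E}_H(a\otimes b)=a\diamond P_H(b)$, $\mathcal{E}_{H,O}(a\otimes b)=a\diamond P_{H,O}(b)$. *)

(* Defs.v *)
From HB Require Import structures.
From mathcomp Require Import all_boot all_order all_algebra all_field.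
From mathcomp.real_closed Require Import mxtens.
Set Implicit Arguments. Unset Strict Implicit. Unset Printing Implicit Defensive.
Import Order.TTheory GRing.Theory Num.Theory.
Local Open Scope ring_scope.

(* M_d = 'M[algC]_d ;  M_d (x) M_d is identified with 'M[algC]_(d*d) via the
   Kronecker product  a (x) b = a *t b  (mathcomp real_closed/mxtens). *)

Definition schur (d : nat) (a b : 'M[algC]_d) : 'M[algC]_d :=
  \matrix_(i, j) (a i j * b i j).

Definition stochastic (d : nat) (P : 'M[algC]_d) : Prop :=
  (forall i j, 0 <= P i j) /\ (forall i, \sum_j P i j = 1).

(* P_H(A) = sum_{i,j,k,l} sqrt(Pi_ik Pi_jl) a_kl e_ij  (same shape for P_{H,O} with Q) *)
Definition PH (d : nat) (Pi A : 'M[algC]_d) : 'M[algC]_d :=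
  \matrix_(i, j) \sum_k \sum_l sqrtC (Pi i k * Pi j l) * A k l.

Definition lin_ext (d : nat) (f : 'M[algC]_d -> 'M[algC]_d -> 'M[algC]_d)
  (X : 'M[algC]_(d * d)) : 'M[algC]_d :=
  \sum_i \sum_j \sum_k \sum_l
     X (mxtens_index (i, k)) (mxtens_index (j, l)) *: f (delta_mx i j) (delta_mx k l).

Definition EH (d : nat) (Pi : 'M[algC]_d) : 'M[algC]_(d * d) -> 'M[algC]_d :=
  lin_ext (fun a b => schur a (PH Pi b)).

Definition EHO (d : nat) (Q : 'M[algC]_d) : 'M[algC]_(d * d) -> 'M[algC]_d :=
  lin_ext (fun a b => schur a (PH Q b)).

Definition EHOt (d : nat) (Pi Q : 'M[algC]_d) : 'M[algC]_(d * d) -> 'M[algC]_d :=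
  lin_ext (fun a b => EH Pi (EHO Q (a *t (1%:M : 'M[algC]_d)) *t b)).

Definition positive_mx (n : nat) (x : 'M[algC]_n) : Prop :=
  exists y : 'M[algC]_n, x = (map_mx Num.conj y)^T *m y.

(* amplification id_n (x) Phi : M_n (x) M_m -> M_n (x) M_p *)
Definition ampl (n m p : nat) (Phi : 'M[algC]_m -> 'M[algC]_p)
  (X : 'M[algC]_(n * m)) : 'M[algC]_(n * p) :=
  \sum_r \sum_s (delta_mx r s : 'M[algC]_n) *t
      Phi (\matrix_(u, v) X (mxtens_index (r, u)) (mxtens_index (s, v))).

Definition completely_positive (m p : nat) (Phi : 'M[algC]_m -> 'M[algC]_p) : Prop :=
  forall (n : nat) (X : 'M[algC]_(n * m)), positive_mx X -> positive_mx (ampl Phi X).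

(* Main.v *)
Require Import Defs.
From HB Require Import structures.
From mathcomp Require Import all_boot all_order all_algebra all_field.
From mathcomp.real_closed Require Import mxtens.
From mathcomp Require Import ring.
Import Order.TTheory GRing.Theory Num.Theory.
Local Open Scope ring_scope.

Section Aux.
Variable d : nat.
Local Notation idx := mxtens_index.

Lemma sum_delta2 (F : 'I_d -> 'I_d -> algC) i j :
  \sum_i' \sum_j' (delta_mx i' j' : 'M[algC]_d) i j * F i' j' = F i j.
Proof.
rewrite (bigD1 i) //= [X in _ + X]big1 => [|i' ne]; last first.
  by apply: big1 => j' _; rewrite mxE eq_sym (negbTE ne) mul0r.
rewrite addr0 (bigD1 j) //= [X in _ + X]big1 => [|j' ne]; last first.
  by rewrite mxE eqxx eq_sym (negbTE ne) mul0r.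
by rewrite mxE !eqxx mul1r addr0.
Qed.

Lemma sum_delta2' (F : 'I_d -> 'I_d -> algC) i j :
  \sum_i' \sum_j' (delta_mx i j : 'M[algC]_d) i' j' * F i' j' = F i j.
Proof.
rewrite -[RHS](sum_delta2 F i j); apply: eq_bigr => i' _; apply: eq_bigr => j' _.
by rewrite !mxE eq_sym [j' == j]eq_sym.
Qed.

Lemma lin_extE (f : 'M[algC]_d -> 'M[algC]_d -> 'M[algC]_d)
  (G : 'I_d -> 'I_d -> 'I_d -> 'I_d -> algC) :
  (forall i' j' k l i j, f (delta_mx i' j') (delta_mx k l) i j = delta_mx i' j' i j * G i j k l) ->
  forall X i j, lin_ext f X i j = \sum_k \sum_l X (idx (i, k)) (idx (j, l)) * G i j k l.
Proof.
move=> Hf X i j.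
transitivity (\sum_i' \sum_j' (delta_mx i' j' : 'M[algC]_d) i j *
   \sum_k \sum_l X (idx (i', k)) (idx (j', l)) * G i j k l); last first.
  exact: (sum_delta2 (fun i' j' => \sum_k \sum_l X (idx (i', k)) (idx (j', l)) * G i j k l)).
rewrite /lin_ext summxE; apply: eq_bigr => i' _; rewrite summxE; apply: eq_bigr => j' _.
rewrite summxE mulr_sumr; apply: eq_bigr => k _; rewrite summxE mulr_sumr; apply: eq_bigr => l _.
by rewrite mxE Hf mulrCA.
Qed.

Lemma PH_delta (P : 'M[algC]_d) k l i j : PH P (delta_mx k l) i j = sqrtC (P i k * P j l).
Proof.
rewrite mxE -[RHS](sum_delta2' (fun k l => sqrtC (P i k * P j l)) k l).
by apply: eq_bigr => k' _; apply: eq_bigr => l' _; rewrite mulrC.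
Qed.

Lemma EHE (P : 'M[algC]_d) X i j :
  EH P X i j = \sum_k \sum_l X (idx (i, k)) (idx (j, l)) * sqrtC (P i k * P j l).
Proof.
apply: (@lin_extE _ (fun i j k l => sqrtC (P i k * P j l))) => i' j' k l i0 j0.
by rewrite mxE PH_delta.
Qed.

Definition Aq (Q : 'M[algC]_d) i j := \sum_k sqrtC (Q i k * Q j k).

Lemma EHOtE (Pi Q : 'M[algC]_d) X i j :
  EHOt Pi Q X i j = \sum_k \sum_l X (idx (i, k)) (idx (j, l)) * (Aq Q i j * sqrtC (Pi i k * Pi j l)).
Proof.
apply: (@lin_extE _ (fun i j k l => Aq Q i j * sqrtC (Pi i k * Pi j l))) => i' j' k l i0 j0.
rewrite EHE.
transitivity (\sum_k0 \sum_l0 (delta_mx k l : 'M[algC]_d) k0 l0 *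
     (EHO Q (delta_mx i' j' *t 1%:M) i0 j0 * sqrtC (Pi i0 k0 * Pi j0 l0))).
  by apply: eq_bigr => k0 _; apply: eq_bigr => l0 _; rewrite tensmxE mulrA [_ * delta_mx _ _ _ _]mulrC.
rewrite sum_delta2' mulrA; congr (_ * _).
rewrite /EHO (@lin_extE _ (fun i j k l => sqrtC (Q i k * Q j l))); last first.
  by move=> *; rewrite mxE PH_delta.
rewrite /Aq mulr_sumr; apply: eq_bigr => k0 _.
rewrite (bigD1 k0) //= [X in _ + X]big1 => [|l0 ne]; last by rewrite tensmxE !mxE [k0 == _]eq_sym (negbTE ne) mulr0 mul0r.
by rewrite addr0 tensmxE !mxE eqxx mulr1.
Qed.
End Aux.
Arguments Aq {d}.
Lemma PH1E d (Q : 'M[algC]_d) i j : PH Q 1%:M i j = Aq Q i j.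
Proof.
rewrite mxE /Aq; apply: eq_bigr => k _.
rewrite (bigD1 k) //= [X in _ + X]big1 => [|l ne]; last by rewrite !mxE eq_sym (negbTE ne) mulr0.
by rewrite !mxE eqxx mulr1 addr0.
Qed.

Lemma part3 d (Pi Q a b : 'M[algC]_d) :
  EHOt Pi Q (a *t b) = schur (schur a (PH Q 1%:M)) (PH Pi b).
Proof.
apply/matrixP => i j; rewrite EHOtE [schur _ _ i j]mxE [schur a _ i j]mxE PH1E [PH Pi b i j]mxE mulr_sumr; apply: eq_bigr => k _.
rewrite mulr_sumr; apply: eq_bigr => l _; rewrite tensmxE.
ring.
Qed.

Lemma part4 d (Pi Q a b : 'M[algC]_d) :
  EHOt Pi Q (a *t b) =
          \sum_i \sum_j \sum_k \sum_m \sum_l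
            (a i j * b m l * sqrtC (Q i k * Q j k) * sqrtC (Pi i m * Pi j l))
              *: delta_mx i j.
Proof.
apply/matrixP => i j; rewrite EHOtE.
pose F := fun i j => \sum_k \sum_m \sum_l
            (a i j * b m l * sqrtC (Q i k * Q j k) * sqrtC (Pi i m * Pi j l)).
transitivity (\sum_i' \sum_j' (delta_mx i' j' : 'M[algC]_d) i j * F i' j'); last first.
  rewrite summxE; apply: eq_bigr => i' _; rewrite summxE; apply: eq_bigr => j' _.
  rewrite mulr_sumr summxE; apply: eq_bigr => k _; rewrite mulr_sumr summxE; apply: eq_bigr => m _.
  rewrite mulr_sumr summxE; apply: eq_bigr => l _.
  rewrite !mxE; case: (i =P i') => [<-|_]; case: (j =P j') => [<-|_] /=; rewrite ?mul1r ?mulr1 ?mul0r ?mulr0 // mulrC.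
rewrite sum_delta2 /F.
rewrite [RHS]exchange_big; apply: eq_bigr => m _.
rewrite [RHS]exchange_big; apply: eq_bigr => l _.
rewrite tensmxE /Aq mulr_suml mulr_sumr; apply: eq_bigr => k _.
ring.
Qed.
Definition ct {m n} (M : 'M[algC]_(m, n)) : 'M[algC]_(n, m) := (map_mx Num.conj M)^T.

Lemma ctE m n (M : 'M[algC]_(m, n)) : ct M = map_mx Num.conj (trmx M).
Proof. by rewrite /ct map_trmx. Qed.

Lemma ct_mul m n p (A : 'M[algC]_(m, n)) (B : 'M[algC]_(n, p)) : ct (A *m B) = ct B *m ct A.
Proof. by rewrite /ct map_mxM trmx_mul. Qed.

Lemma ctK m n (A : 'M[algC]_(m, n)) : ct (ct A) = A.
Proof. by apply/matrixP => i j; rewrite !mxE conjCK. Qed.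

Lemma compress m p (Z : 'M[algC]_(m, p)) : exists y : 'M[algC]_p, ct Z *m Z = ct y *m y.
Proof.
set H := ct Z *m Z.
have Hct : ct H = H by rewrite /H ct_mul ctK.
have Hn : H \is normalmx by apply/normalmxP; rewrite -ctE Hct.
have /orthomx_spectralP HE := Hn.
set P := spectralmx H in HE; set x := spectral_diag H in HE.
have Pu : P \is unitarymx := spectral_unitarymx H.
have PP : P *m ct P = 1%:M by rewrite ctE; apply/unitarymxP.
rewrite invmx_unitary // -ctE in HE.
have Dx : diag_mx x = P *m H *m ct P.
  by rewrite HE !mulmxA PP mul1mx -mulmxA PP mulmx1.
have x_ge0 : forall j, 0 <= x 0 j.
  move=> j; have := congr1 (fun M : 'M[algC]_p => M j j) Dx; rewrite /= mxE eqxx mulr1n => ->.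
  rewrite /H !mulmxA -(mulmxA _ Z) -[P *m ct Z]ctK ct_mul ctK mxE.
  apply: sumr_ge0 => k _; rewrite !mxE mulrC; exact: mul_conjC_ge0.
exists (diag_mx (\row_j sqrtC (x 0 j)) *m P).
rewrite ct_mul [H]HE -!mulmxA; congr (_ *m _); rewrite !mulmxA; congr (_ *m _).
rewrite ctE tr_diag_mx map_diag_mx mulmx_diag; congr diag_mx.
apply/rowP => j; rewrite !mxE.
have s0 : 0 <= sqrtC (x 0 j) by rewrite sqrtC_ge0.
by rewrite -[X in _ = X * _]/((sqrtC (x 0 j))^*) conj_Creal ?ger0_real // -expr2 sqrtCK.
Qed.
Local Notation idx := mxtens_index.

Lemma sum_idx N d (F : 'I_(N * d) -> algC) :
  \sum_g F g = \sum_a \sum_b F (idx (a, b)).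
Proof.
rewrite pair_big /=; apply: (reindex (fun p : 'I_N * 'I_d => idx (p.1, p.2))).
by exists (@mxtens_unindex N d) => [[x1 x2]|x] _ /=; rewrite ?mxtens_indexK ?mxtens_unindexK //.
Qed.

Lemma conj_sqrt (x : algC) : 0 <= x -> (sqrtC x)^* = sqrtC x.
Proof. by move=> x0; rewrite conj_Creal // ger0_real // sqrtC_ge0. Qed.

Lemma part1 d (Pi Q : 'M[algC]_d) :
  stochastic Pi -> stochastic Q -> completely_positive (EHOt Pi Q).
Proof.
move=> [Pi0 _] [Q0 _] n X [Y ->].
pose W : 'M[algC]_((n * (d * d)) * d, n * d) := \matrix_(g, c)
  \sum_k Y (mxtens_unindex g).1 (idx ((mxtens_unindex c).1, idx ((mxtens_unindex c).2, k))) *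
     (sqrtC (Q (mxtens_unindex c).2 (mxtens_unindex g).2) * sqrtC (Pi (mxtens_unindex c).2 k)).
have [y Hy] := compress _ _ W.
exists y; rewrite -Hy.
apply/matrixP => a b; case: (mxtens_indexP a) => r i; case: (mxtens_indexP b) => s j.
pose F := fun r' s' => EHOt Pi Q (\matrix_(u, v) (ct Y *m Y) (idx (r', u)) (idx (s', v))) i j.
transitivity (\sum_r' \sum_s' (delta_mx r' s' : 'M[algC]_n) r s * F r' s').
  rewrite /ampl summxE; apply: eq_bigr => r' _; rewrite summxE; apply: eq_bigr => s' _.
  by rewrite tensmxE.
rewrite sum_delta2 /F EHOtE mxE sum_idx.
pose T := fun (g : 'I_(n * (d * d))) (q k l : 'I_d) =>
  (Y g (idx (r, idx (i, k))))^* * Y g (idx (s, idx (j, l))) *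
  (sqrtC (Q i q) * sqrtC (Q j q)) * (sqrtC (Pi i k) * sqrtC (Pi j l)).
transitivity (\sum_k \sum_l \sum_g \sum_q T g q k l).
  apply: eq_bigr => k _; apply: eq_bigr => l _.
  rewrite mxE [(ct Y *m Y) _ _]mxE mulr_suml; apply: eq_bigr => g _.
  rewrite /Aq mulr_suml mulr_sumr; apply: eq_bigr => q _.
  rewrite /T /ct !mxE sqrtCM ?nnegrE // sqrtCM ?nnegrE //; ring.
transitivity (\sum_g \sum_q \sum_k \sum_l T g q k l).
  under eq_bigr => k _ do rewrite exchange_big.
  under eq_bigr => k _ do under eq_bigr => g _ do rewrite exchange_big.
  rewrite exchange_big; apply: eq_bigr => g _.
  by rewrite exchange_big.
apply: eq_bigr => g _; apply: eq_bigr => q _.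
rewrite /ct !mxE !mxtens_indexK /= rmorph_sum mulr_suml; apply: eq_bigr => k _.
rewrite mulr_sumr; apply: eq_bigr => l _.
rewrite /T !rmorphM /= !conj_sqrt //; ring.
Qed.

Lemma Aq_diag d (Q : 'M[algC]_d) : stochastic Q -> forall i, Aq Q i i = 1.
Proof.
move=> [Q0 Q1] i; rewrite /Aq -(Q1 i); apply: eq_bigr => k _.
by rewrite -expr2 sqrCK.
Qed.

Lemma part2 d (Pi Q : 'M[algC]_d) : stochastic Pi -> stochastic Q ->
  EHOt Pi Q ((1%:M : 'M[algC]_d) *t (1%:M : 'M[algC]_d)) = 1%:M.
Proof.
move=> sP sQ; rewrite part3; apply/matrixP => i j.
rewrite [schur _ _ i j]mxE [schur _ _ i j]mxE !PH1E.
case: (i =P j) => [<-|ne]; first by rewrite !Aq_diag // !mxE eqxx mulr1n !mulr1.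
by rewrite !mxE; move/eqP/negbTE: ne => ->; rewrite mulr0n !mul0r.
Qed.

Theorem mainTheorem6 (d : nat) (Pi Q : 'M[algC]_d) :
  (0 < d)%N -> stochastic Pi -> stochastic Q ->
  [/\ completely_positive (EHOt Pi Q),
      EHOt Pi Q ((1%:M : 'M[algC]_d) *t (1%:M : 'M[algC]_d)) = 1%:M,
      (forall a b : 'M[algC]_d,
          EHOt Pi Q (a *t b) = schur (schur a (PH Q 1%:M)) (PH Pi b)) &
      (forall a b : 'M[algC]_d,
          EHOt Pi Q (a *t b) =
          \sum_i \sum_j \sum_k \sum_m \sum_l
            (a i j * b m l * sqrtC (Q i k * Q j k) * sqrtC (Pi i m * Pi j l))
              *: delta_mx i j)].
Proof.
move=> _ sP sQ; split.
- exact: part1.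
- exact: part2.
- exact: part3.
- exact: part4.
Qed.
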